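(* Let $\beta_1,\dots,\beta_d$ be fixed positive reals and let $c>0$ satisfy $c\le\sum_{i=1}^d\beta_i$. Over positive reals $\alpha_1,\dots,\alpha_d$ with $\sum_{i=1}^d\alpha_i=c$, the minimum of $$f(\alpha_1,\dots,\alpha_d)=\sum_{i=1}^d\frac{\beta_i}{\alpha_i}+\sum_{i=1}^d\ln\alpha_i$$ is achieved at $\alpha_i^*=\frac{\sqrt{1-4\lambda^*\beta_i}-1}{-2\lambda^*}$, where $\lambda^*\le0$ is the unique solution of $\sum_{i=1}^d\frac{2\beta_i}{1+\sqrt{1-4\lambda^*\beta_i}}=c$. *)

(* Defs.v *)
From mathcomp Require Import all_boot all_order all_algebra.
From mathcomp Require Import all_classical all_reals all_analysis.
Set Implicit Arguments. Unset Strict Implicit. Unset Printing Implicit Defensive.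
Import Order.TTheory GRing.Theory Num.Theory.
Local Open Scope ring_scope.

Definition fobj (R : realType) (d : nat) (beta alpha : 'I_d -> R) : R :=
  \sum_(i < d) beta i / alpha i + \sum_(i < d) ln (alpha i).

Definition feasible (R : realType) (d : nat) (c : R) (alpha : 'I_d -> R) : Prop :=
  (forall i, 0 < alpha i) /\ \sum_(i < d) alpha i = c.

Definition lam_eq (R : realType) (d : nat) (beta : 'I_d -> R) (c lam : R) : Prop :=
  \sum_(i < d) (2 * beta i) / (1 + Num.sqrt (1 - 4 * lam * beta i)) = c.

(* alpha^*_i = (sqrt(1 - 4 lam beta_i) - 1)/(-2 lam); for lam = 0 the formula is
   0/0 and we use its (continuous) limit value beta_i. *)
Definition alpha_star (R : realType) (d : nat) (beta : 'I_d -> R) (lam : R)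
  (i : 'I_d) : R :=
  if lam == 0 then beta i
  else (Num.sqrt (1 - 4 * lam * beta i) - 1) / (- 2 * lam).

(* Main.v *)
Require Import Defs.
From mathcomp Require Import all_boot all_order all_algebra.
From mathcomp Require Import all_classical all_reals all_analysis.
From mathcomp Require Import ring lra.
Import Order.TTheory GRing.Theory Num.Theory.
Import numFieldNormedType.Exports.
Local Open Scope ring_scope.

Section S.
Variable R : realType.

Lemma coord_ineq (b al a l : R) : l <= 0 -> 0 < al -> 0 < a ->
  b = al - l * al ^+ 2 ->
  b / al + ln al - l * al <= b / a + ln a - l * a.
Proof.
move=> hl hal ha hb.
have hln : ln al - ln a <= al / a - 1.
  rewrite -ln_div ?posrE //.
  have h0 : 0 < al / a by exact: divr_gt0.
  have := @le_ln1Dx R (al / a - 1).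
  rewrite [1 + _]addrC subrK; apply.
  idtac.
  lra.
have key : b / a - b / al - al / a + 1 - l * a + l * al = - l * (al - a) ^+ 2 / a.
  rewrite hb; field.
  by apply/andP; split; rewrite gt_eqF.
have : 0 <= - l * (al - a) ^+ 2 / a.
  apply: divr_ge0; last exact: ltW.
  apply: mulr_ge0; [lra | exact: sqr_ge0].
lra.
Qed.

Lemma term_cont (b : R) : continuous (fun l : R => 2 * b / (1 + Num.sqrt (1 - 4 * l * b))).
Proof.
move=> x.
have c0 : forall k : R, {for x, continuous (fun=> k)} by move=> k; exact: cst_continuous.
have i0 : {for x, continuous (@id R)} by [].
have h1 : {for x, continuous (fun l : R => 1 - 4 * l * b)}.
  exact: (continuousD (c0 1) (continuousN (continuousM (continuousM (c0 4) i0) (c0 b)))).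
have h2 : {for x, continuous (fun l : R => Num.sqrt (1 - 4 * l * b))}.
  exact: (continuous_comp h1 (@sqrt_continuous R _)).
have h3 : {for x, continuous (fun l : R => 1 + Num.sqrt (1 - 4 * l * b))}.
  exact: (continuousD (c0 1) h2).
have hne : 1 + Num.sqrt (1 - 4 * x * b) != 0.
  by rewrite gt_eqF // ltr_wpDr ?sqrtr_ge0.
have h4 := @continuousV _ _ (fun l : R => 1 + Num.sqrt (1 - 4 * l * b)) x hne h3.
exact: (continuousM (c0 (2 * b)) h4).
Qed.

Lemma sum_cont (d : nat) (F : 'I_d -> R -> R) :
  (forall i, continuous (F i)) -> continuous (fun l => \sum_(i < d) F i l).
Proof.
move=> hF x.
suff : forall r : seq 'I_d, {for x, continuous (fun l => \sum_(i <- r) F i l)} by apply.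
elim=> [|a r IH].
  rewrite (_ : (fun l => \sum_(i <- [::]) F i l) = fun=> 0); last first.
    by apply/funext => l; rewrite big_nil.
  exact: cst_continuous.
rewrite (_ : (fun l => \sum_(i <- a :: r) F i l) = (fun l => F a l + \sum_(i <- r) F i l)); last first.
  by apply/funext => l; rewrite big_cons.
exact: (continuousD (hF a x) IH).
Qed.

Lemma term_lt (b l1 l2 : R) : 0 < b -> l1 < l2 -> l2 <= 0 ->
  2 * b / (1 + Num.sqrt (1 - 4 * l1 * b)) < 2 * b / (1 + Num.sqrt (1 - 4 * l2 * b)).
Proof.
move=> hb hl hl2.
have hs : Num.sqrt (1 - 4 * l2 * b) < Num.sqrt (1 - 4 * l1 * b).
  rewrite ltr_sqrt; first nra.
  nra.
rewrite ltr_pM2l; last lra.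
have h1 := sqrtr_ge0 (1 - 4 * l1 * b).
have h2 := sqrtr_ge0 (1 - 4 * l2 * b).
rewrite ltf_pV2 ?posrE; lra.
Qed.

Lemma term_bound (b B u : R) : 0 < b -> b <= B -> 0 < u ->
  2 * b / (1 + Num.sqrt (1 - 4 * (- (B * u ^+ 2)) * b)) <= u^-1.
Proof.
move=> hb hbB hu.
have hr : 2 * b * u <= Num.sqrt (1 - 4 * (- (B * u ^+ 2)) * b).
  have h0 : 0 <= 2 * b * u by apply: mulr_ge0 => //; lra.
  have u2 : 0 <= u ^+ 2 by exact: sqr_ge0.
  have m1 : b * b * u ^+ 2 <= B * b * u ^+ 2.
    apply: ler_wpM2r => //; apply: ler_wpM2r => //; lra.
  have m2 : 0 <= b * b * u ^+ 2 by apply: mulr_ge0 => //; apply: mulr_ge0; lra.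
  have E2 : 1 - 4 * (- (B * u ^+ 2)) * b = 1 + 4 * (B * b * u ^+ 2) by ring.
  rewrite -(ger0_norm h0) -sqrtr_sqr ler_sqrt E2; last lra.
  have E1 : (2 * b * u) ^+ 2 = 4 * (b * b * u ^+ 2) by ring.
  rewrite E1; lra.
have hs := sqrtr_ge0 (1 - 4 * (- (B * u ^+ 2)) * b).
rewrite ler_pdivrMr; last lra.
have hu' : 0 < u^-1 by rewrite invr_gt0.
have e : u^-1 * (2 * b * u) = 2 * b by field; rewrite gt_eqF.
have : u^-1 * (2 * b * u) <= u^-1 * (1 + Num.sqrt (1 - 4 * (- (B * u ^+ 2)) * b)).
  apply: ler_wpM2l; [lra|lra].
lra.
Qed.

Lemma alpha_formula (d : nat) (beta : 'I_d -> R) (l : R) i :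
  0 < beta i -> l <= 0 ->
  alpha_star beta l i = 2 * beta i / (1 + Num.sqrt (1 - 4 * l * beta i)).
Proof.
move=> hb hl; rewrite /alpha_star.
have hs0 : 0 <= 1 - 4 * l * beta i by nra.
have hr := sqrtr_ge0 (1 - 4 * l * beta i).
have hrr : Num.sqrt (1 - 4 * l * beta i) ^+ 2 = 1 - 4 * l * beta i by rewrite sqr_sqrtr.
case: eqP => [->|/eqP hl0].
  rewrite mulr0 mul0r subr0 sqrtr1; field; done.
apply/eqP; rewrite eqr_div; first last.
- by rewrite gt_eqF //; lra.
- by rewrite mulf_neq0 // oppr_eq0 pnatr_eq0.
apply/eqP.
transitivity (Num.sqrt (1 - 4 * l * beta i) ^+ 2 - 1); first ring.
rewrite hrr; ring.
Qed.

Lemma alpha_key (b l : R) : l <= 0 -> 0 < b ->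
  b = 2 * b / (1 + Num.sqrt (1 - 4 * l * b)) - l * (2 * b / (1 + Num.sqrt (1 - 4 * l * b))) ^+ 2.
Proof.
move=> hl hb.
have hs0 : 0 <= 1 - 4 * l * b by nra.
have hr := sqrtr_ge0 (1 - 4 * l * b).
have hrr : Num.sqrt (1 - 4 * l * b) ^+ 2 = 1 - 4 * l * b by rewrite sqr_sqrtr.
set r := Num.sqrt _ in hr hrr *; clearbody r.
have hne : 1 + r != 0 by rewrite gt_eqF //; lra.
apply/eqP; rewrite -subr_eq0; apply/eqP.
transitivity (b * (r ^+ 2 - 1 + 4 * l * b) / (1 + r) ^+ 2); first by field.
by rewrite hrr; ring.
Qed.

End S.

Theorem lemma11 (R : realType) (d : nat) (beta : 'I_d -> R) (c : R)
  (hbeta : forall i, 0 < beta i) (hc : 0 < c)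
  (hcle : c <= \sum_(i < d) beta i) :
  (exists! lam : R, lam <= 0 /\ lam_eq beta c lam) /\
  (forall lam : R, lam <= 0 -> lam_eq beta c lam ->
     feasible c (alpha_star beta lam) /\
     (forall alpha : 'I_d -> R, feasible c alpha ->
        fobj beta (alpha_star beta lam) <= fobj beta alpha)).
Proof.
set g := fun l : R => \sum_(i < d) 2 * beta i / (1 + Num.sqrt (1 - 4 * l * beta i)).
have gE : forall l, lam_eq beta c l <-> g l = c by [].
have hd : (0 < d)%N.
  case: d beta hbeta hcle {g gE} => // beta hbeta; rewrite big_ord0 => h; lra.
have gmono : forall l1 l2, l1 < l2 -> l2 <= 0 -> g l1 < g l2.
  move=> l1 l2 h12 h2; apply: ltr_sum; first by rewrite /index_enum -enumT; case: d hd {beta hbeta hcle g gE} => // n _; rewrite enum_ordSl.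
  by move=> i _; apply: term_lt.
split.
  have g0 : g 0 = \sum_(i < d) beta i.
    apply: eq_bigr => i _; rewrite !mulr0 mul0r subr0 sqrtr1; field; done.
  set B := \sum_(i < d) beta i in hcle g0 *.
  set n : R := d%:R.
  have hn : 0 < n by rewrite ltr0n.
  set u := n / c.
  have hu : 0 < u by apply: divr_gt0.
  set l0 := - (B * u ^+ 2).
  have hB : 0 < B by exact: lt_le_trans hc hcle.
  have hl0 : l0 <= 0 by rewrite /l0 oppr_le0; apply: mulr_ge0; [lra | exact: sqr_ge0].
  have gl0 : g l0 <= c.
    apply: (le_trans (y := \sum_(i < d) u^-1)).
      apply: ler_sum => i _; apply: term_bound => //.
      rewrite /B (bigD1 i) //= lerDl; apply: sumr_ge0 => j _; exact: ltW.
    rewrite sumr_const card_ord -mulr_natr -/n /u invf_div divfK //; by rewrite gt_eqF.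
  have := @IVT R g l0 0 c hl0 (continuous_subspaceT (@sum_cont R d _ (fun i => @term_cont R (beta i)))).
  case.
    rewrite g0 (_ : Num.min (g l0) B = g l0); last by apply/min_idPl; lra.
    rewrite (_ : Num.max (g l0) B = B); last by apply/max_idPr; lra.
    by apply/andP; split.
  move=> lam; rewrite in_itv /= => /andP [_ hlam] glam.
  exists lam; split; first by split.
  move=> l' [hl' gl']; have gl'' : g l' = c by [].
  clear gl'.
  case: (ltgtP lam l') => // h.
    by have := gmono _ _ h hl'; lra.
  by have := gmono _ _ h hlam; lra.
move=> lam hlam heq; rewrite /lam_eq in heq.
have aE := fun i => @alpha_formula R d beta lam i (hbeta i) hlam.
have hpos : forall i, 0 < alpha_star beta lam i.
  move=> i; rewrite aE; apply: divr_gt0; first by have := hbeta i; lra.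
  have := sqrtr_ge0 (1 - 4 * lam * beta i); lra.
have hsum : \sum_(i < d) alpha_star beta lam i = c.
  by rewrite -heq; apply: eq_bigr => i _; rewrite aE.
split; first by split.
move=> alpha [ha hsa].
have H : \sum_(i < d) (beta i / alpha_star beta lam i + ln (alpha_star beta lam i) - lam * alpha_star beta lam i)
  <= \sum_(i < d) (beta i / alpha i + ln (alpha i) - lam * alpha i).
  apply: ler_sum => i _; apply: coord_ineq => //.
  rewrite aE; exact: alpha_key.
rewrite /fobj.
move: H; rewrite !big_split /= !sumrN -!mulr_sumr hsum hsa.
lra.
Qed.
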